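(* Let $p\ge 3$ be a prime and write $\dfrac{(q^2;q^2)_\infty^2}{(q;q)_\infty(q^p;q^p)_\infty}=\sum_{n\ge0}a_nq^n$. Let $$N=N(p)=\max_s\ \min\Big\{\tfrac{r(r+1)}{2} : 0\le r\le p-1,\ \tfrac{r(r+1)}{2}\equiv s\pmod p\Big\}-p,$$ the maximum over residues $s\in\{0,\dots,p-1\}$ for which the set is nonempty. Then for all $n>N$: $a_n>0$ if $n\equiv \frac{r(r+1)}{2}\pmod p$ for some integer $r$, and $a_n=0$ otherwise.
   Context: For $|q|<1$, $(a;q)_\infty=\prod_{k\ge0}(1-aq^k)$. *)

(* Defs.v *)
From mathcomp Require Import all_boot all_order all_algebra.
Set Implicit Arguments. Unset Strict Implicit. Unset Printing Implicit Defensive.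
Import Order.TTheory GRing.Theory Num.Theory.
Local Open Scope ring_scope.

Definition tri (r : nat) : nat := (r * r.+1)./2.

(* Truncated geometric series 1 + X^m + ... + X^(m*n), i.e. 1/(1 - X^m)
   modulo X^(n+1) when m >= 1. *)
Definition geomp (m n : nat) : {poly int} := \sum_(j < n.+1) 'X^(m * j).

(* a p n := coefficient of q^n in (q^2;q^2)_oo^2 / ((q;q)_oo (q^p;q^p)_oo),
   as a formal power series.  Only the factors with index k <= n can affect
   the coefficient of q^n, and the truncated geometric series agree with
   1/(1-q^m) up to degree n, so the n-th coefficient of the polynomial below
   is exactly the n-th power-series coefficient. *)
Definition qcoef (p n : nat) : int :=
  (\prod_(k < n) ((1 - 'X^(2 * k.+1)) ^+ 2 * geomp k.+1 n * geomp (p * k.+1) n))`_n.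

(* min { r(r+1)/2 : 0 <= r <= p-1, r(r+1)/2 = s mod p } (meaningful when the
   set is nonempty; p*p exceeds every element of the set). *)
Definition mintri (p s : nat) : nat :=
  (\big[minn/(p * p)]_(r < p | tri r %% p == s) tri r)%N.

Definition maxmintri (p : nat) : nat :=
  (\max_(s < p | [exists r : 'I_p, tri r %% p == s]) mintri p s)%N.

Definition Nbound (p : nat) : int := (maxmintri p)%:Z - p%:Z.

(* Main.v *)
Require Import Defs.
From mathcomp Require Import all_boot all_order all_algebra.
From mathcomp Require Import zify ring lra.
Import Order.TTheory GRing.Theory Num.Theory.
Set Implicit Arguments. Unset Strict Implicit. Unset Printing Implicit Defensive.
Local Open Scope ring_scope.


Lemma tri2 r : ((tri r).*2 = r * r.+1)%N.
Proof.
rewrite /tri halfK oddM /= andbN subn0 //.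
Qed.

Lemma triS r : (tri r.+1 = tri r + r.+1)%N.
Proof. have h1 := tri2 r; have h2 := tri2 r.+1. nia. Qed.

Lemma tri_ge r : (r <= tri r)%N.
Proof. have h := tri2 r. nia. Qed.

Definition cong (M : nat) (a b : {poly int}) := forall i, (i < M)%N -> a`_i = b`_i.

Lemma cong_refl M a : cong M a a. Proof. by []. Qed.
Lemma cong_sym M a b : cong M a b -> cong M b a.
Proof. by move=> h i hi; rewrite h. Qed.
Lemma cong_trans M a b c : cong M a b -> cong M b c -> cong M a c.
Proof. by move=> h1 h2 i hi; rewrite h1 ?h2. Qed.

Lemma cong_mull M a b c : cong M a b -> cong M (a * c) (b * c).
Proof.
move=> h i hi; rewrite !coefM; apply: eq_bigr => j _; rewrite h //.
by apply: leq_ltn_trans hi; rewrite -ltnS.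
Qed.

Lemma cong_mul M a b c d : cong M a b -> cong M c d -> cong M (a * c) (b * d).
Proof.
move=> h1 h2; apply: (cong_trans (cong_mull c h1)).
rewrite (mulrC b) (mulrC b); exact: cong_mull.
Qed.

Lemma cong_add M a b c d : cong M a b -> cong M c d -> cong M (a + c) (b + d).
Proof. by move=> h1 h2 i hi; rewrite !coefD h1 ?h2. Qed.

Lemma cong_sum M n (F G : nat -> {poly int}) :
  (forall i, (i < n)%N -> cong M (F i) (G i)) ->
  cong M (\sum_(i < n) F i) (\sum_(i < n) G i).
Proof.
move=> h j hj; rewrite !coef_sum; apply: eq_bigr => i _; exact: h.
Qed.

Lemma cong_prod M n (F G : nat -> {poly int}) :
  (forall i, (i < n)%N -> cong M (F i) (G i)) ->
  cong M (\prod_(i < n) F i) (\prod_(i < n) G i).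
Proof.
elim: n => [|n IH] h; first by rewrite !big_ord0.
rewrite !big_ord_recr /=; apply: cong_mul; last exact: h.
by apply: IH => i hi; apply: h; apply: ltnW.
Qed.

Lemma cong_Xn M e a : (M <= e)%N -> cong M ('X^e * a) 0.
Proof.
move=> he i hi; rewrite coefXnM coef0.
by have -> : (i < e)%N by apply: leq_trans he.
Qed.

Lemma cong_cancel M (a b u : {poly int}) : u`_0 != 0 -> cong M (a * u) (b * u) -> cong M a b.
Proof.
move=> hu h.
suff H : forall i, (i < M)%N -> (a - b)`_i = 0.
  by move=> i hi; move/eqP: (H i hi); rewrite coefB subr_eq0 => /eqP.
have hd : cong M ((a - b) * u) 0.
  by move=> i hi; rewrite mulrBl coefB h // subrr coef0.
elim/ltn_ind => i IH hi.
have := hd i hi; rewrite coef0 coefM big_ord_recr /= subnn.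
rewrite big1 ?add0r.
  by move/eqP; rewrite mulf_eq0 (negbTE hu) orbF => /eqP.
move=> j _; rewrite IH ?mul0r //; by apply: ltn_trans hi.
Qed.


Fixpoint qbin (N k : nat) : {poly int} :=
  match N, k with
  | 0, 0 => 1
  | 0, _.+1 => 0
  | N'.+1, 0 => 1
  | N'.+1, k'.+1 => qbin N' k'.+1 + 'X^(N' - k') * qbin N' k'
  end.

Definition qq (j : nat) : {poly int} := \prod_(i < j) (1 - 'X^(i.+1)).

Lemma qqS j : qq j.+1 = qq j * (1 - 'X^(j.+1)).
Proof. by rewrite /qq big_ord_recr. Qed.

Lemma qbin0 N : qbin N 0 = 1. Proof. by case: N. Qed.

Lemma qbin_gt N k : (N < k)%N -> qbin N k = 0.
Proof.
elim: N k => [|N IH] [|k] //= h.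
by rewrite !IH ?mulr0 ?addr0 // ltnW.
Qed.

Lemma qbin_fact N k : (k <= N)%N -> qq k * qq (N - k) * qbin N k = qq N.
Proof.
elim: N k => [|N IH] [|k] //=.
- by move=> _; rewrite /qq !big_ord0 !mulr1.
- by move=> _; rewrite subn0 /qq big_ord0 mul1r mulr1.
rewrite ltnS => hk; rewrite subSS mulrDr.
have e2 : qq k.+1 * qq (N - k) * ('X^(N - k) * qbin N k)
          = (1 - 'X^(k.+1)) * 'X^(N - k) * (qq k * qq (N - k) * qbin N k).
  by rewrite qqS; ring.
rewrite e2 IH // (qqS N).
case: (ltnP k N) => hkN.
- have -> : qq (N - k) = qq (N - k.+1) * (1 - 'X^(N - k)).
    by rewrite -(subnSK hkN) qqS.
  have e1 : qq k.+1 * (qq (N - k.+1) * (1 - 'X^(N - k))) * qbin N k.+1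
     = (1 - 'X^(N - k)) * (qq k.+1 * qq (N - k.+1) * qbin N k.+1) by ring.
  rewrite e1 IH //.
  have -> : ('X^(N.+1) : {poly int}) = 'X^(N - k) * 'X^(k.+1) by rewrite -exprD; congr ('X^_); lia.
  ring.
- have ekN : k = N by apply/eqP; rewrite eqn_leq hk hkN.
  rewrite ekN qbin_gt // mulr0 add0r subnn expr0 mulr1.
  by rewrite mulrC.
Qed.

Lemma tri_pred k : tri k = (tri k.-1 + k)%N.
Proof. by case: k => [|k] //; rewrite triS. Qed.

Lemma qbin_thm a N : \prod_(i < N) ('X^a + 'X^i) =
  \sum_(k < N.+1) 'X^(tri k.-1 + a * (N - k)) * qbin N k.
Proof.
elim: N => [|N IH].
  by rewrite big_ord0 big_ord1 /= muln0 expr0 mul1r.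
rewrite big_ord_recr /= IH mulrDr !mulr_suml.
rewrite [in RHS]big_ord_recl /= ?qbin0 mulr1.
rewrite (big_ord_recl N (fun i : 'I_N.+1 => _ * 'X^a)) /= ?qbin0 mulr1 -exprD.
have -> : (0 + a * (N - 0) + a = 0 + a * N.+1)%N by nia.
rewrite -!addrA; congr (_ + _).
rewrite /bump /=.
under [X in _ = X]eq_bigr => k _ do rewrite !add0n add1n subSS mulrDr.
under eq_bigr => k _ do rewrite !add0n add1n.
rewrite big_split /=; congr (_ + _).
- rewrite big_ord_recr /= qbin_gt // mulr0 addr0.
  apply: eq_bigr => k _.
  rewrite mulrAC -exprD; congr ('X^_ * _).
  have := ltn_ord k; nia.
- apply: eq_bigr => k _.
  rewrite mulrCA mulrA -exprD mulrAC -exprD; congr ('X^_ * _).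
  have := ltn_ord k; rewrite ltnS => hk.
  rewrite (tri_pred k); nia.
Qed.


Lemma prodX n (f : nat -> nat) : \prod_(i < n) ('X^(f i) : {poly int}) = 'X^(\sum_(i < n) f i).
Proof.
elim: n => [|n IH]; first by rewrite !big_ord0.
by rewrite !big_ord_recr /= IH exprD.
Qed.

Lemma sum_id n : (\sum_(i < n.+1) i = tri n)%N.
Proof.
elim: n => [|n IH]; first by rewrite big_ord1.
by rewrite big_ord_recr IH triS.
Qed.

Definition PP L : {poly int} := \prod_(j < L) (1 + 'X^(j.+1)).

Definition ee M k := if (M.+1 <= k)%N then tri (k - M.+1) else tri (M - k).

Lemma Xn_neq0 n : ('X^n : {poly int}) != 0.
Proof. exact: monic_neq0 (monicXn _ n). Qed.

Lemma tri_add a b : (tri (a + b) = tri a + tri b + a * b)%N.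
Proof. have h1 := tri2 a; have h2 := tri2 b; have h3 := tri2 (a + b); nia. Qed.

Lemma sym M : 2 * PP M * PP M.+1 =
  \sum_(k < (M.+1 + M.+1).+1) 'X^(ee M k) * qbin (M.+1 + M.+1) k.
Proof.
have := qbin_thm M (M.+1 + M.+1).
rewrite big_split_ord.
have e2 : \prod_(i < M.+1) ('X^M + 'X^(M.+1 + i)) = 'X^(M * M.+1) * PP M.+1 :> {poly int}.
  rewrite /PP (eq_bigr (fun i : 'I_M.+1 => 'X^M * (1 + 'X^(i.+1)))).
    by rewrite big_split /= prodr_const card_ord -exprM.
  by move=> i _; rewrite mulrDr mulr1 -exprD addSnnS.
have e1 : \prod_(i < M.+1) ('X^M + 'X^i) = 'X^(tri M) * (2 * PP M) :> {poly int}.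
  have -> : \prod_(i < M.+1) ('X^M + 'X^i) = \prod_(i < M.+1) ('X^i * (1 + 'X^(M - i))) :> {poly int}.
    apply: eq_bigr => i _; rewrite mulrDr mulr1 -exprD subnKC 1?addrC //.
    by rewrite -ltnS.
  rewrite big_split /= (prodX _ (fun i => i)) sum_id; congr (_ * _).
  rewrite (reindex_inj rev_ord_inj) /= big_ord_recl /=.
  have -> : (M - (M.+1 - 1) = 0)%N by lia.
  rewrite expr0 /PP; congr (_ * _); apply: eq_bigr => i _; congr (1 + 'X^_).
  rewrite /bump /=; have := ltn_ord i; lia.
move=> H.
have H3 : 'X^(tri M + M * M.+1) * (2 * PP M * PP M.+1) =
  \sum_(k < (M.+1 + M.+1).+1) 'X^(tri k.-1 + M * (M.+1 + M.+1 - k)) * qbin (M.+1 + M.+1) k.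
  have e1' : \prod_(i < M.+1) ('X^M + 'X^(lshift M.+1 i)) = 'X^(tri M) * (2 * PP M) :> {poly int} by exact: e1.
  have e2' : \prod_(i < M.+1) ('X^M + 'X^(rshift M.+1 i)) = 'X^(M * M.+1) * PP M.+1 :> {poly int} by exact: e2.
  rewrite -H e1' e2' exprD /=; ring.
apply: (mulfI (Xn_neq0 (tri M + M * M.+1))); rewrite H3 mulr_sumr.
apply: eq_bigr => k _; rewrite mulrA -exprD; congr ('X^_ * _).
have hk := ltn_ord k; rewrite /ee; move: (nat_of_ord k) hk => k0 hk.
case: ifP => hMk.
- have [t ht] : exists t, k0 = (M.+1 + t)%N by exists (k0 - M.+1)%N; lia.
  rewrite ht in hk *; rewrite addKn.
  have -> : ((M.+1 + t).-1 = M + t)%N by lia.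
  rewrite tri_add. have ht' : (t <= M.+1)%N by lia. rewrite subnDl mulnBr. have : (M * t <= M * M.+1)%N by rewrite leq_mul2l ht' orbT. lia.
- have [s hs] : exists s, M = (k0 + s)%N by exists (M - k0)%N; lia.
  rewrite hs addKn.
  have -> : ((k0 + s).+1 + (k0 + s).+1 - k0 = k0 + s.*2 + 2)%N by lia.
  case: k0 {hk hMk hs} => [|k0].
    rewrite !add0n /=. have h1 := tri2 s. nia.
  rewrite succnK addSn triS tri_add. have h1 := tri2 s. have h2 := tri2 k0. nia.
Qed.


Definition T n : {poly int} := \sum_(r < n.+1) 'X^(tri r).

Lemma cong_1pX M e : (M <= e)%N -> cong M (1 + 'X^e) 1.
Proof.
move=> he i hi; rewrite coefD coefXn.
have -> : (i == e) = false by apply/negbTE; rewrite neq_ltn (leq_trans hi he).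
by rewrite addr0.
Qed.

Lemma cong_1mX M e : (M <= e)%N -> cong M (1 - 'X^e) 1.
Proof.
move=> he i hi; rewrite coefB coefXn.
have -> : (i == e) = false by apply/negbTE; rewrite neq_ltn (leq_trans hi he).
by rewrite subr0.
Qed.

Lemma prod_tail M n d (F : nat -> {poly int}) :
  (forall j, (n <= j)%N -> cong M (F j) 1) ->
  cong M (\prod_(j < n + d) F j) (\prod_(j < n) F j).
Proof.
move=> h; elim: d => [|d IH]; first by rewrite addn0.
rewrite addnS big_ord_recr /= -[X in cong _ _ X]mulr1.
by apply: cong_mul => //; apply: h; apply: leq_addr.
Qed.

Lemma prod_tail' M n L (F : nat -> {poly int}) : (n <= L)%N ->
  (forall j, (n <= j)%N -> cong M (F j) 1) ->
  cong M (\prod_(j < L) F j) (\prod_(j < n) F j).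
Proof. by move=> hL h; rewrite -(subnKC hL); apply: prod_tail. Qed.

Lemma qq_cong n j : (n <= j)%N -> cong n.+1 (qq j) (qq n).
Proof.
move=> h; rewrite /qq; apply: (prod_tail' (F := fun i => 1 - 'X^(i.+1))) => // i hi.
exact: cong_1mX.
Qed.

Lemma PP_cong n j : (n <= j)%N -> cong n.+1 (PP j) (PP n).
Proof.
move=> h; rewrite /PP; apply: (prod_tail' (F := fun i => 1 + 'X^(i.+1))) => // i hi.
exact: cong_1pX.
Qed.

Lemma qq0 n : (qq n)`_0 = 1.
Proof.
elim: n => [|n IH]; first by rewrite /qq big_ord0 coef1.
by rewrite qqS coef0M IH coefB coef1 coefXn /= subr0 mul1r.
Qed.

Lemma qbinQ n N k : (n <= k)%N -> (n <= N - k)%N -> (k <= N)%N ->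
  cong n.+1 (qbin N k * qq n) 1.
Proof.
move=> h1 h2 h3.
apply: (@cong_cancel _ _ _ (qq n)); first by rewrite qq0.
have := qbin_fact h3 => e.
have c : cong n.+1 (qq k * qq (N - k) * qbin N k) (qq n * qq n * qbin N k).
  by apply: cong_mul => //; apply: cong_mul; apply: qq_cong.
have c2 : cong n.+1 (qq n * qq n * qbin N k) (qq n).
  apply: cong_trans (cong_sym c) _; rewrite e; apply: qq_cong; lia.
rewrite mul1r; have -> : qbin N k * qq n * qq n = qq n * qq n * qbin N k by ring.
exact: c2.
Qed.

Lemma cong_sum0 M n (F : nat -> {poly int}) :
  (forall i, (i < n)%N -> cong M (F i) 0) -> cong M (\sum_(i < n) F i) 0.
Proof.
move=> h; have := cong_sum (G := fun _ => 0) h; by rewrite big1_eq.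
Qed.

Lemma Tsum_cong n L : (n.+1 <= L)%N -> cong n.+1 (\sum_(r < L) 'X^(tri r)) (T n).
Proof.
move=> hL; rewrite -(subnKC hL) big_split_ord /T -[X in cong _ _ X]addr0.
apply: cong_add => //; apply: (cong_sum0 (F := fun i => 'X^(tri (n.+1 + i)))) => i _.
rewrite -[X in cong _ X _]mulr1; apply: cong_Xn.
apply: leq_trans (tri_ge _); exact: leq_addr.
Qed.

Lemma two0 : (2 : {poly int})`_0 != 0.
Proof. by rewrite coefMn coef1. Qed.

Lemma gauss n : cong n.+1 ((\prod_(k < n) (1 - 'X^(2 * k.+1))) ^+ 2) (T n * qq n).
Proof.
set M := (n + n).+1.
have hs := sym M.
have L1 : cong n.+1 (2 * PP M * PP M.+1 * qq n) (2 * T n).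
  rewrite hs mulr_suml.
  apply: (@cong_trans _ _ (\sum_(k < (M.+1 + M.+1).+1) 'X^(ee M k))).
    apply: (cong_sum (F := fun k => 'X^(ee M k) * qbin (M.+1 + M.+1) k * qq n) (G := fun k => 'X^(ee M k))) => k hk.
    case: (leqP n.+1 (ee M k)) => he.
      rewrite -mulrA; apply: cong_trans (cong_Xn _ he) _.
      apply: cong_sym; rewrite -[X in cong _ X _]mulr1; exact: cong_Xn.
    rewrite -mulrA -[X in cong _ _ X]mulr1; apply: cong_mul => //.
    have [h1 h2 h3] : [/\ (n <= k)%N, (n <= M.+1 + M.+1 - k)%N & (k <= M.+1 + M.+1)%N].
      move: he; rewrite /ee ltnS; have := tri_ge (k - M.+1); have := tri_ge (M - k).
      rewrite /M; case: ifP => hc ? ? ?; split; lia.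
    exact: qbinQ.
  rewrite -addnS big_split_ord mulr_natl mulr2n.
  have e1 : \sum_(i < M.+1) 'X^(ee M (lshift M.+2 i)) = \sum_(r < M.+1) 'X^(tri r) :> {poly int}.
    rewrite [RHS](reindex_inj rev_ord_inj); apply: eq_bigr => i _.
    rewrite /ee /=; have := ltn_ord i; case: ifP => h hi; first by lia.
    by rewrite subSS.
  have e2 : \sum_(i < M.+2) 'X^(ee M (rshift M.+1 i)) = \sum_(r < M.+2) 'X^(tri r) :> {poly int}.
    apply: eq_bigr => i _; rewrite /ee /= leq_addr addKn //.
  have c1 : cong n.+1 (\sum_(i < M.+1) 'X^(ee M (lshift M.+2 i))) (T n).
    by rewrite e1; apply: Tsum_cong; rewrite /M; lia.
  have c2 : cong n.+1 (\sum_(i < M.+2) 'X^(ee M (rshift M.+1 i))) (T n).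
    by rewrite e2; apply: Tsum_cong; rewrite /M; lia.
  exact: (cong_add c1 c2).
have L2 : cong n.+1 (2 * PP n * PP n * qq n) (2 * T n).
  apply: cong_trans _ L1; apply: cong_mull; apply: cong_mul; last by apply: cong_sym; apply: PP_cong; rewrite /M; lia.
  by apply: cong_mul => //; apply: cong_sym; apply: PP_cong; rewrite /M; lia.
have L3 : cong n.+1 (PP n * PP n * qq n) (T n).
  apply: (cong_cancel two0); rewrite mulrC (mulrC (T n)) !mulrA; exact: L2.
have -> : \prod_(k < n) (1 - 'X^(2 * k.+1)) = PP n * qq n :> {poly int}.
  rewrite /PP /qq -big_split; apply: eq_bigr => i _ /=.
  rewrite mul2n -addnn exprD; ring.
have -> : (PP n * qq n) ^+ 2 = (PP n * PP n * qq n) * qq n by ring.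
exact: cong_mull.
Qed.


Lemma geomp_mul m n : geomp m n * (1 - 'X^m) = 1 - 'X^(m * n.+1).
Proof.
elim: n => [|n IH]; first by rewrite /geomp big_ord1 muln0 expr0 mul1r muln1.
rewrite /geomp big_ord_recr /= -/(geomp m n) mulrDl IH.
have -> : (m * n.+2 = m * n.+1 + m)%N by rewrite mulnS addnC.
rewrite exprD; ring.
Qed.

Lemma geomp_cong m n : (0 < m)%N -> cong n.+1 (geomp m n * (1 - 'X^m)) 1.
Proof.
move=> hm; rewrite geomp_mul; apply: cong_1mX.
by rewrite -{1}[n.+1]mul1n leq_mul2r hm orbT.
Qed.

Definition H p n : {poly int} := \prod_(k < n) geomp (p * k.+1) n.

Lemma qcoefE p n : qcoef p n = (T n * H p n)`_n.
Proof.
suff cA : cong n.+1 (\prod_(k < n) ((1 - 'X^(2 * k.+1)) ^+ 2 * geomp k.+1 n * geomp (p * k.+1) n))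
   (T n * H p n) by exact: cA.
apply: (@cong_cancel _ _ _ (qq n)); first by rewrite qq0.
rewrite !big_split /=.
set a := \prod_(i < n) (1 - 'X^(2 * i.+1)).
set G := \prod_(i < n) geomp i.+1 n.
have -> : a * a * G * \prod_(i < n) geomp (p * i.+1) n * qq n = a ^+ 2 * (G * qq n) * H p n by rewrite /H; ring.
have cG : cong n.+1 (G * qq n) 1.
  rewrite /G /qq -big_split /=.
  have := cong_prod (n := n) (F := fun i => geomp i.+1 n * (1 - 'X^(i.+1))) (G := fun _ => 1) (M := n.+1).
  rewrite big1_eq; apply => i _; exact: geomp_cong.
have -> : T n * H p n * qq n = (T n * qq n) * 1 * H p n by ring.
apply: cong_mull; apply: cong_mul => //; exact: gauss.
Qed.


Definition nonneg (f : {poly int}) := forall i, 0 <= f`_i.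
Definition pdivp (p : nat) (f : {poly int}) := forall i, ~~ (p %| i)%N -> f`_i = 0.

Lemma nonneg_mul f g : nonneg f -> nonneg g -> nonneg (f * g).
Proof. by move=> hf hg i; rewrite coefM; apply: sumr_ge0 => j _; apply: mulr_ge0. Qed.

Lemma pdivp_mul p f g : pdivp p f -> pdivp p g -> pdivp p (f * g).
Proof.
move=> hf hg i hi; rewrite coefM; apply: big1 => j _.
case: (boolP (p %| j)%N) => hj; last by rewrite hf ?mul0r.
rewrite hg ?mulr0 //; apply: contra hi => h2.
by rewrite -(subnKC (_ : (j <= i)%N)) ?dvdn_add // -ltnS.
Qed.

Lemma coef_geomp m n i : (geomp m n)`_i = \sum_(j < n.+1) (i == m * j)%N%:R.
Proof. by rewrite /geomp coef_sum; apply: eq_bigr => j _; rewrite coefXn. Qed.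

Lemma geomp_nonneg m n : nonneg (geomp m n).
Proof. by move=> i; rewrite coef_geomp; apply: sumr_ge0 => j _; case: (_ == _). Qed.

Lemma geomp_pdiv p k n : pdivp p (geomp (p * k) n).
Proof.
move=> i hi; rewrite coef_geomp; apply: big1 => j _.
case: eqP => // h; exfalso; move/negP: hi; apply; rewrite h -mulnA dvdn_mulr //.
Qed.

Lemma geomp0 m n : (0 < m)%N -> (geomp m n)`_0 = 1.
Proof.
move=> hm; rewrite coef_geomp big_ord_recl /= muln0 /= big1 ?addr0 // => j _.
have -> : (0 == m * bump 0 j)%N = false by apply/negbTE; rewrite eq_sym muln_eq0 negb_or -lt0n hm. by [].
Qed.

Lemma H_nonneg p n : nonneg (H p n).
Proof.
rewrite /H; apply: big_ind => //; first by move=> i; rewrite coef1; case: (i == 0)%N.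
  exact: nonneg_mul.
by move=> i _; apply: geomp_nonneg.
Qed.

Lemma H_pdiv p n : pdivp p (H p n).
Proof.
rewrite /H; apply: big_ind => //.
- move=> i hi; rewrite coef1; case: i hi => //; by rewrite dvdn0.
- exact: pdivp_mul.
- by move=> i _; apply: geomp_pdiv.
Qed.

Lemma H0 p n : (0 < p)%N -> (H p n)`_0 = 1.
Proof.
move=> hp.
rewrite /H; apply: (big_ind (fun x : {poly int} => x`_0 = 1)) => //.
- by rewrite coef1.
- by move=> x y hx hy; rewrite coef0M hx hy mulr1.
- by move=> i _; apply: geomp0; rewrite muln_gt0 hp.
Qed.

Lemma coefM_ge f g j : nonneg f -> nonneg g -> f`_j * g`_0 <= (f * g)`_j.
Proof.
move=> hf hg; rewrite coefM big_ord_recr /= subnn lerDr.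
by apply: sumr_ge0 => i _; apply: mulr_ge0.
Qed.

Lemma H_pos p n j : (0 < p)%N -> (p %| j)%N -> (j <= n)%N -> 1 <= (H p n)`_j.
Proof.
move=> hp hpj hjn.
case: j hpj hjn => [|j] hpj hjn; first by rewrite H0.
case: n hjn => [|n] // hjn.
rewrite /H big_ord_recl /=.
apply: le_trans (coefM_ge _ _ _); last first.
- apply: big_ind => //; first by move=> i; rewrite coef1; case: (i == 0)%N.
    exact: nonneg_mul.
  by move=> i _; apply: geomp_nonneg.
- exact: geomp_nonneg.
rewrite (big_ind (fun x : {poly int} => x`_0 = 1)) //; last first.
- by move=> i _; apply: geomp0; rewrite muln_gt0 hp.
- by move=> x y hx hy; rewrite coef0M hx hy mulr1.
- by rewrite coef1.
rewrite mulr1 muln1 coef_geomp.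
have hl : (j.+1 %/ p < n.+2)%N.
  by rewrite ltnS; apply: leq_trans hjn; apply: leq_div.
rewrite (bigD1 (Ordinal hl)) //= [(p * _)%N]mulnC divnK // eqxx.
rewrite lerDl; apply: sumr_ge0 => i _; by case: (_ == _).
Qed.


Lemma coefT n i : (T n)`_i = \sum_(r < n.+1) (i == tri r)%N%:R.
Proof. by rewrite /T coef_sum; apply: eq_bigr => r _; rewrite coefXn. Qed.

Lemma T_nonneg n : nonneg (T n).
Proof. by move=> i; rewrite coefT; apply: sumr_ge0 => j _; case: (_ == _). Qed.

Lemma T_supp n i : (T n)`_i != 0 -> exists r, i = tri r.
Proof.
rewrite coefT => h.
case: (pickP (fun r : 'I_n.+1 => i == tri r)) => [r /eqP hr | h0]; first by exists r.
by move: h; rewrite big1 ?eqxx // => r _; rewrite h0.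
Qed.

Lemma T_pos n r : (tri r <= n)%N -> 1 <= (T n)`_(tri r).
Proof.
move=> h; rewrite coefT.
have hr : (r < n.+1)%N by apply: leq_ltn_trans (tri_ge r) _.
rewrite (bigD1 (Ordinal hr)) //= eqxx lerDl.
by apply: sumr_ge0 => j _; case: (_ == _).
Qed.

Lemma modnMm' (m n d : nat) : (m * n %% d = (m %% d) * (n %% d) %% d)%N.
Proof. by rewrite modnMm. Qed.

Lemma tri_mod p r : prime p -> (3 <= p)%N -> (tri (r %% p) = tri r %[mod p])%N.
Proof.
move=> hp hp3.
have cp : coprime p 2 by rewrite prime_coprime //; apply/negP => /dvdn_leq h; have := h isT; lia.
have h2 : ((tri (r %% p)).*2 = (tri r).*2 %[mod p])%N.
  rewrite !tri2 -modnMm -[((r * r.+1) %% p)%N]modnMm modn_mod -[(r %% p).+1]addn1 modnDml addn1.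
  by [].
move: h2; rewrite -!muln2.
case: (leqP (tri (r %% p)) (tri r)) => hle.
  move/eqP; rewrite eq_sym eqn_mod_dvd ?leq_mul2r ?hle ?orbT // -mulnBl Gauss_dvdl //.
  by rewrite -eqn_mod_dvd // eq_sym => /eqP.
move/eqP; rewrite eqn_mod_dvd ?leq_mul2r ?(ltnW hle) ?orbT // -mulnBl Gauss_dvdl //.
by rewrite -eqn_mod_dvd ?(ltnW hle) // => /eqP.
Qed.


Lemma mintri_attained p s r' : (r' < p)%N -> (tri r' %% p == s)%N ->
  exists rs : 'I_p, (tri rs %% p == s)%N /\ mintri p s = tri rs.
Proof.
move=> hr' hs.
have hle : (mintri p s <= tri r')%N.
  rewrite /mintri -minEnat. exact: (@bigmin_le_cond _ _ _ (p * p)%N (Ordinal hr') (fun r : 'I_p => tri r %% p == s)%N (fun r : 'I_p => tri r) hs).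
have hlt : (tri r' < p * p)%N by have := tri2 r'; nia.
have : mintri p s = (p * p)%N \/ exists rs : 'I_p, (tri rs %% p == s)%N /\ mintri p s = tri rs.
  rewrite /mintri; apply: (big_ind (fun x => x = (p * p)%N \/ exists rs : 'I_p, (tri rs %% p == s)%N /\ x = tri rs)).
  - by left.
  - move=> x y hx hy; rewrite /minn; case: ifP => _; [exact: hx | exact: hy].
  - by move=> i hi; right; exists i.
case=> // e; exfalso; lia.
Qed.

Theorem theorem1p3 (p : nat) (hp : prime p) (hp3 : (3 <= p)%N) :
  forall n : nat, Nbound p < n%:Z ->
    ((exists r : nat, (n = tri r %[mod p])%N) -> 0 < qcoef p n) /\
    (~ (exists r : nat, (n = tri r %[mod p])%N) -> qcoef p n = 0).
Proof.
move=> n hN; have p0 : (0 < p)%N by apply: prime_gt0.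
rewrite qcoefE coefM; split.
- case=> r0 hr0.
  have hr' : (r0 %% p < p)%N by apply: ltn_pmod.
  have hs' : (tri (r0 %% p) %% p == n %% p)%N by rewrite tri_mod // hr0.
  have [rs [hrs1 hrs2]] := mintri_attained hr' hs'.
  have hmax : (mintri p (n %% p) <= maxmintri p)%N.
    rewrite /maxmintri.
    apply: (@leq_bigmax_cond _ _ (fun s : 'I_p => mintri p s) (Ordinal (ltn_pmod n p0))).
    by apply/existsP; exists (Ordinal hr').
  have hb : (tri rs < n + p)%N.
    move: hN; rewrite /Nbound -hrs2; lia.
  have hle : (tri rs <= n)%N.
    rewrite leqNgt; apply/negP => hgt.
    have : (p %| tri rs - n)%N by rewrite -eqn_mod_dvd ?(ltnW hgt) //.
    move/dvdn_leq; rewrite subn_gt0 => /(_ hgt); lia.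
  have hdiv : (p %| n - tri rs)%N by rewrite -eqn_mod_dvd // eq_sym.
  have hj : (tri rs < n.+1)%N by [].
  rewrite (bigD1 (Ordinal hj)) //=.
  have h1 := T_pos (r := rs) hle.
  have h2 := H_pos p0 hdiv (leq_subr (tri rs) n).
  have h3 : 0 <= \sum_(i < n.+1 | i != Ordinal hj) (T n)`_i * (H p n)`_(n - i).
    by apply: sumr_ge0 => i _; apply: mulr_ge0; [apply: T_nonneg | apply: H_nonneg].
  have h4 : 0 < (T n)`_(tri rs) * (H p n)`_(n - tri rs).
    by apply: mulr_gt0; lia.
  apply: lt_le_trans h4 _; rewrite lerDl; exact: h3.
- move=> hne; apply: big1 => j _.
  case: (eqVneq ((T n)`_j) 0) => [-> | hT]; first by rewrite mul0r.
  have [r hr] := T_supp hT.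
  rewrite H_pdiv ?mulr0 //; apply/negP => hd; apply: hne; exists r.
  apply/eqP; rewrite -hr eqn_mod_dvd //; have := ltn_ord j; lia.
Qed.
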